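(* Let the data $A^\pm$, $C$, $\mu^\pm$ satisfy the standing assumptions below and let $x\in S\cap\mathbb{R}^n$. Then $x$ is a local optimum if and only if, for every $\mathcal{H}\in\mathfrak{G}(x)$, the minimum capacity of an $s$-$t$ cut in $\mathcal{H}$ equals $D$. Moreover, if $x$ is not a local optimum, then for some $\mathcal{H}\in\mathfrak{G}(x)$ there is a minimum $s$-$t$ cut $(X,Y)$ ($s\in X$, $t\in Y$) with capacity less than $D$, and $J=Y\cap[n]$ is a feasible descent direction at $x$, i.e. $x+\delta\chi_J\in S$ and $f(x+\delta\chi_J)<f(x)$ for all $0<\delta<\epsilon(x)$.
   Context: $\mathbb{R}_{\max}=\mathbb{R}\cup\{-\infty\}$, $[n]=\{1,\dots,n\}$, $\chi_J$ is the indicator vector of $J$. Data: $A^\pm=(a^\pm_{i,j})\in\mathbb{R}_{\max}^{m\times n}$, $C=(c_{k,j})\in\mathbb{R}_{\max}^{p\times n}$, $\mu^+\in\mathbb{Z}_{\ge0}^p$, $\mu^-\in\mathbb{Z}_{\ge0}^n$; $A=(a_{i,j})$ with $a_{i,j}=\max(a^+_{i,j},a^-_{i,j})$. Objective $f(x)=\sum_k\mu^+_k\max_j(c_{k,j}+x_j)-\sum_j\mu^-_jx_j$; feasible set $S=\{x:\max_j(a^+_{i,j}+x_j)\ge\max_j(a^-_{i,j}+x_j)\ \forall i\in[m]\}$. Standing assumptions: every row of $A$ and of $C$ has a finite entry; $\sum_k\mu^+_k=\sum_j\mu^-_j=:D$; the undirected graph on $\{u_1,\dots,u_p\}\cup[n]\cup\{w_1,\dots,w_m\}$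 with edges $\{u_k,j\}$ ($c_{k,j}\ne-\infty$) and $\{w_i,j\}$ ($a_{i,j}\ne-\infty$) is connected. A point $x\in S\cap\mathbb{R}^n$ is a local optimum if there is $\delta>0$ with $f(y)\ge f(x)$ for all $y\in S\cap\mathbb{R}^n$ with $\max_j|x_j-y_j|<\delta$. Let $\epsilon(x)$ be the smallest positive value among the numbers $|(a_{i,j_1}+x_{j_1})-(a_{i,j_2}+x_{j_2})|$ and $|(c_{k,j_1}+x_{j_1})-(c_{k,j_2}+x_{j_2})|$ over $i,k,j_1,j_2$. Tangent digraph $\mathcal{G}(x)$: vertices $U=\{u_1,\dots,u_p\}$, $V=[n]$, $W=\{w_1,\dots,w_m\}$; edges $E_1(x)=\{(u_k,j):\max_{j'}(c_{k,j'}+x_{j'})=c_{k,j}+x_j\}$, $E_2(x)=\{(w_i,j):\max_{j'}(a_{i,j'}+x_{j'})=a^-_{i,j}+x_j\}$, $E_3(x)=\{(j,w_i):\max_{j'}(a_{i,j'}+x_{j'})=a^+_{i,j}+x_j\}$. The extended digraph $\overline{\mathcal{G}}(x)$ adds vertices $s,t$ and edges $(s,u_k)$ of capacity $\mu^+_k$ ($k\in[p]$) and $(j,t)$ of capacity $\mu^-_j$ ($j\in[n]$); every edge of $E_1(x)\cup E_2(x)\cup E_3(x)$ has capacity $D$. $\mathfrak{G}(x)$ is the set of subgraphs of $\overline{\mathcal{G}}(x)$ obtained by deleting edges of $E_3(x)$ so that each $w_i$ has exactly one incoming edge. The capacity of an $s$-$t$ cut $(X,Y)$ is the total capacity of edges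 from $X$ to $Y$. *)

(* Defs.v *)
(* R : realType (mathcomp-analysis reals).
   The tropical semiring R_max = R u {-oo} is modelled by [option R],
   with [None] standing for -oo. *)
From HB Require Import structures.
From mathcomp Require Import all_boot all_order all_algebra.
From mathcomp Require Import reals.
Set Implicit Arguments.
Unset Strict Implicit.
Unset Printing Implicit Defensive.
Import Order.TTheory GRing.Theory Num.Theory.
Local Open Scope ring_scope.

Section TropicalLP.
Variable R : realType.

Definition addo (a : option R) (y : R) : option R := omap (fun r => r + y) a.

Definition maxo (a b : option R) : option R :=
  match a, b with
  | None, _ => b
  | _, None => a
  | Some r, Some s => Some (Num.max r s)
  end.

Definition leo (a b : option R) : bool :=
  match a, b with
  | None, _ => true
  | Some _, None => false
  | Some r, Some s => r <= s
  end.

Variables (m n p : nat).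

Definition rowmax (a : 'I_n -> option R) (x : 'I_n -> R) : option R :=
  \big[maxo/None]_(j < n) addo (a j) (x j).

Variables (Ap Am : 'I_m -> 'I_n -> option R) (C : 'I_p -> 'I_n -> option R)
          (mup : 'I_p -> nat) (mum : 'I_n -> nat).

Definition Amat (i : 'I_m) (j : 'I_n) : option R := maxo (Ap i j) (Am i j).

Definition Dtot : nat := (\sum_(k < p) mup k)%N.

(* objective; under the standing assumption each row max of C is finite,
   so [odflt 0] never uses its default *)
Definition fobj (x : 'I_n -> R) : R :=
  \sum_(k < p) (mup k)%:R * odflt 0 (rowmax (C k) x)
  - \sum_(j < n) (mum j)%:R * x j.

Definition feasible (x : 'I_n -> R) : Prop :=
  forall i : 'I_m, leo (rowmax (Am i) x) (rowmax (Ap i) x).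

Definition local_optimum (x : 'I_n -> R) : Prop :=
  feasible x /\
  exists delta : R, 0 < delta /\
    forall y : 'I_n -> R, feasible y ->
      (forall j, `|x j - y j| < delta) -> fobj x <= fobj y.

(* 0 < delta < eps(x), where eps(x) is the smallest positive value among
   the |(a_{i,j1}+x_{j1}) - (a_{i,j2}+x_{j2})| and
   |(c_{k,j1}+x_{j1}) - (c_{k,j2}+x_{j2})| (finite entries); if there is
   no positive such value, eps(x) = +oo. *)
Definition below_eps (x : 'I_n -> R) (delta : R) : Prop :=
  0 < delta /\
  (forall (i : 'I_m) (j1 j2 : 'I_n) (r1 r2 : R),
      Amat i j1 = Some r1 -> Amat i j2 = Some r2 ->
      0 < `|(r1 + x j1) - (r2 + x j2)| -> delta < `|(r1 + x j1) - (r2 + x j2)|) /\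
  (forall (k : 'I_p) (j1 j2 : 'I_n) (r1 r2 : R),
      C k j1 = Some r1 -> C k j2 = Some r2 ->
      0 < `|(r1 + x j1) - (r2 + x j2)| -> delta < `|(r1 + x j1) - (r2 + x j2)|).

(* undirected bipartite-type graph on U u [n] u W, vertices encoded as
   inl (inl k) = u_k, inl (inr j) = j, inr i = w_i *)
Definition uvert : finType := ('I_p + 'I_n + 'I_m)%type.

Definition uedge (a b : uvert) : bool :=
  match a, b with
  | inl (inl k), inl (inr j) => C k j != None
  | inl (inr j), inl (inl k) => C k j != None
  | inr i, inl (inr j) => Amat i j != None
  | inl (inr j), inr i => Amat i j != None
  | _, _ => false
  end.

Definition standing_assumptions : Prop :=
  (forall i : 'I_m, exists j : 'I_n, Amat i j != None) /\
  (forall k : 'I_p, exists j : 'I_n, C k j != None) /\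
  (\sum_(k < p) mup k = \sum_(j < n) mum j)%N /\
  (forall a b : uvert, connect uedge a b).

Definition E1 (x : 'I_n -> R) (k : 'I_p) (j : 'I_n) : bool :=
  rowmax (C k) x == addo (C k j) (x j).
Definition E2 (x : 'I_n -> R) (i : 'I_m) (j : 'I_n) : bool :=
  rowmax (Amat i) x == addo (Am i j) (x j).
Definition E3 (x : 'I_n -> R) (j : 'I_n) (i : 'I_m) : bool :=
  rowmax (Amat i) x == addo (Ap i j) (x j).

(* vertices of the extended digraph:
   inl true = s, inl false = t, inr (inl (inl k)) = u_k,
   inr (inl (inr j)) = j, inr (inr i) = w_i *)
Definition vert : finType := (bool + ('I_p + 'I_n + 'I_m))%type.
Definition vs : vert := inl true.
Definition vt : vert := inl false.

(* A member H of frak G(x) is given by the set K of retained E3 edges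
   (j, w_i): K is a subset of E3(x) and each w_i has exactly one
   incoming edge (all incoming edges of w_i are E3 edges). *)
Definition in_frakG (x : 'I_n -> R) (K : {set 'I_n * 'I_m}) : Prop :=
  (forall e, e \in K -> E3 x e.1 e.2) /\
  (forall i : 'I_m, #|[set j : 'I_n | (j, i) \in K]| = 1%N).

Definition capH (x : 'I_n -> R) (K : {set 'I_n * 'I_m}) (u v : vert) : nat :=
  match u, v with
  | inl true, inr (inl (inl k)) => mup k
  | inr (inl (inr j)), inl false => mum j
  | inr (inl (inl k)), inr (inl (inr j)) => if E1 x k j then Dtot else 0%N
  | inr (inr i), inr (inl (inr j)) => if E2 x i j then Dtot else 0%N
  | inr (inl (inr j)), inr (inr i) => if (j, i) \in K then Dtot else 0%N
  | _, _ => 0%N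
  end.

Definition is_cut (X : {set vert}) : bool := (vs \in X) && (vt \notin X).

Definition cutcap (x : 'I_n -> R) (K : {set 'I_n * 'I_m}) (X : {set vert}) : nat :=
  (\sum_(u in X) \sum_(v in ~: X) capH x K u v)%N.

Lemma is_cut_s : is_cut [set vs].
Proof. by rewrite /is_cut !inE eqxx. Qed.

Definition mincut (x : 'I_n -> R) (K : {set 'I_n * 'I_m}) : nat :=
  cutcap x K [arg min_(X < [set vs] | is_cut X) cutcap x K X].

Definition is_min_cut (x : 'I_n -> R) (K : {set 'I_n * 'I_m}) (X : {set vert}) : Prop :=
  is_cut X /\ forall Y, is_cut Y -> (cutcap x K X <= cutcap x K Y)%N.

Definition Jof (X : {set vert}) : {set 'I_n} := [set j | inr (inl (inr j)) \notin X].

Definition shift (x : 'I_n -> R) (J : {set 'I_n}) (delta : R) : 'I_n -> R :=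
  fun j => x j + (if j \in J then delta else 0).

End TropicalLP.

(* Main.v *)
Require Import Defs.
From HB Require Import structures.
From mathcomp Require Import all_boot all_order all_algebra.
From mathcomp Require Import reals ring lra zify.
From Stdlib Require Import Classical.
Import Order.TTheory GRing.Theory Num.Theory.
Set Implicit Arguments. Unset Strict Implicit. Unset Printing Implicit Defensive.
Local Open Scope ring_scope.

Section Opt.
Variable R : realType.
Implicit Types (a b c : option R).

Lemma leo_maxo a b c : leo (maxo a b) c = leo a c && leo b c.
Proof.
case: a => [r|]; case: b => [s|]; case: c => [t|] //=; rewrite ?andbT //.
by rewrite ge_max.
Qed.

Lemma maxo_cases a b : maxo a b = a \/ maxo a b = b.
Proof.
case: a => [r|]; case: b => [s|] /=; auto.
rewrite /Num.max; case: ifP; auto.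
Qed.

Lemma leo_refl a : leo a a.
Proof. by case: a => //= r. Qed.

Lemma leo_maxl a b : leo a (maxo a b).
Proof. case: a => [r|]; case: b => [s|] //=; by rewrite ?le_max ?lexx. Qed.
Lemma leo_maxr a b : leo b (maxo a b).
Proof. case: a => [r|]; case: b => [s|] //=; by rewrite ?le_max ?lexx ?orbT. Qed.

Lemma bigmaxo_lub (I : finType) (P : pred I) (F : I -> option R) c :
  (forall i, P i -> leo (F i) c) -> leo (\big[@maxo R/None]_(i | P i) F i) c.
Proof.
move=> H; elim/big_ind: _ => // x y hx hy; by rewrite leo_maxo hx hy.
Qed.

Lemma bigmaxo_seq_ub (I : eqType) (r : seq I) (F : I -> option R) i :
  i \in r -> leo (F i) (\big[@maxo R/None]_(j <- r) F j).
Proof.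
elim: r => // j r IH; rewrite inE big_cons => /orP [/eqP -> | /IH h].
  exact: leo_maxl.
case: (F i) h => // s; case: (\big[@maxo R/None]_(j0 <- r) F j0) => // t /= h.
case: (F j) => [u|] //=; by rewrite le_max h orbT.
Qed.

Lemma bigmaxo_ub (I : finType) (P : pred I) (F : I -> option R) i :
  P i -> leo (F i) (\big[@maxo R/None]_(j | P j) F j).
Proof.
move=> Pi; rewrite -big_filter; apply: bigmaxo_seq_ub.
by rewrite mem_filter Pi mem_index_enum.
Qed.

Lemma bigmaxo_att (I : finType) (P : pred I) (F : I -> option R) :
  \big[@maxo R/None]_(j | P j) F j = None \/
  exists2 j, P j & \big[@maxo R/None]_(j | P j) F j = F j.
Proof.
elim/big_ind: _; [by left | | by move=> i Pi; right; exists i].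
move=> x y hx hy; case: (maxo_cases x y) => ->; auto.
Qed.

Lemma leo_trans b a c : leo a b -> leo b c -> leo a c.
Proof.
case: a => [r|]; case: b => [s|]; case: c => [t|] //=; exact: le_trans.
Qed.

End Opt.

Section Tangent.
Variables (R : realType) (n p m : nat).
Variables (S : 'I_p -> pred 'I_n) (T2 T3 : 'I_m -> 'I_n -> bool).
Variables (a : 'I_p -> R) (b : 'I_n -> R).

Definition mxs (P : pred 'I_n) (d : 'I_n -> R) : R :=
  odflt 0 (\big[@maxo R/None]_(j | P j) Some (d j)).

Lemma mxsP (P : pred 'I_n) (d : 'I_n -> R) j0 : P j0 ->
  (forall j, P j -> d j <= mxs P d) /\ exists2 j, P j & mxs P d = d j.
Proof.
move=> Pj0; rewrite /mxs.
have ub := bigmaxo_ub (fun j => Some (d j)) (P := P).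
case: (bigmaxo_att P (fun j => Some (d j))) => [E|[j Pj E]].
  by have := ub _ Pj0; rewrite E.
rewrite E /=; split; last by exists j.
by move=> i Pi; have := ub _ Pi; rewrite E.
Qed.

Lemma mxs_eq (P : pred 'I_n) (d : 'I_n -> R) v : (forall j, P j -> d j <= v) -> (exists2 j, P j & d j = v) ->
  mxs P d = v.
Proof.
move=> ub [j Pj E]; have [ub' [j' Pj' E']] := mxsP d Pj.
rewrite E' in ub' *; apply/eqP; rewrite eq_le (ub _ Pj') /= -E; exact: ub'.
Qed.

Lemma mxs_ext (P : pred 'I_n) (d e : 'I_n -> R) : (forall j, P j -> d j = e j) -> mxs P d = mxs P e.
Proof. by move=> H; rewrite /mxs (eq_bigr _ (fun j Pj => congr1 Some (H j Pj))). Qed.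

Definition TF (d : 'I_n -> R) :=
  forall i j, T2 i j -> exists j', T3 i j' /\ d j <= d j'.
Definition gg (d : 'I_n -> R) :=
  \sum_k a k * mxs (S k) d - \sum_j b j * d j.
Definition chi (J : {set 'I_n}) (j : 'I_n) : R := if j \in J then 1 else 0.

Definition nonmax (d : 'I_n -> R) : {set 'I_n} := [set j | [exists j', d j < d j']].

Lemma const_g (d : 'I_n -> R) : (forall k, exists j, S k j) -> \sum_k a k = \sum_j b j ->
  nonmax d = set0 -> gg d = 0.
Proof.
move=> hS hab E.
have le_all j j' : d j <= d j'.
  have : j' \notin nonmax d by rewrite E inE.
  rewrite /nonmax inE negb_exists => /forallP /(_ j); by rewrite -leNgt.
case: (pickP (@predT 'I_n)) => [j0 _|none].
  have hk k : mxs (S k) d = d j0.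
    have [j Sj] := hS k; apply: mxs_eq => [i _|]; first exact: le_all.
    by exists j => //; apply/eqP; rewrite eq_le !le_all.
  rewrite /gg (eq_bigr (fun k => a k * d j0)) => [|k _]; last by rewrite hk.
  rewrite (eq_bigr (fun j => b j * d j0)) => [|j _]; last first.
    by congr (_ * _); apply/eqP; rewrite eq_le !le_all.
  by rewrite -!mulr_suml hab subrr.
rewrite /gg !big1 ?subrr // => i _.
  by have := none i.
by have [j Sj] := hS i; have := none j.
Qed.

Lemma sum_lin (I : finType) (c : R) (u x y : I -> R) :
  \sum_k u k * (x k + c * y k) = \sum_k u k * x k + c * \sum_k u k * y k.
Proof.
rewrite mulr_sumr -big_split /=; apply: eq_bigr => k _; ring.
Qed.

Lemma key_tangent : (forall k, exists j, S k j) -> \sum_k a k = \sum_j b j ->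
  forall d, TF d -> gg d < 0 -> exists J, TF (chi J) /\ gg (chi J) < 0.
Proof.
move=> hS hab.
suff H : forall N d, (#|nonmax d| <= N)%N -> TF d -> gg d < 0 ->
   exists J, TF (chi J) /\ gg (chi J) < 0.
  by move=> d; apply: (H _ d (leqnn _)).
elim=> [|N IH] d hN hTF hg.
  have E : nonmax d = set0 by apply/eqP; rewrite -cards_eq0 -leqn0.
  by move: hg; rewrite const_g // ltxx.
have [E|/set0Pn [j1 hj1]] := eqVneq (nonmax d) set0.
  by move: hg; rewrite const_g // ltxx.
pose w := mxs predT d.
have [ubw [jt _ hjt]] := mxsP (P := predT) d (isT : predT j1).
pose T := [set j | d j == w].
pose P' := fun j => j \notin T.
have j1T : P' j1.
  move: hj1; rewrite /P' /nonmax !inE => /existsP [j' lt]; apply/eqP => E.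
  by have := ubw j' isT; rewrite -/w -E leNgt lt.
pose w' := mxs P' d.
have [ubw' [j2 hj2 hw']] := mxsP d j1T.
rewrite -/w' in ubw' hw'.
rewrite -/w in ubw hjt.
have lew j : d j <= w by apply: ubw.
have ltww' : w' < w.
  rewrite hw' lt_neqAle lew andbT; move: hj2; by rewrite /P' inE.
have notT j : j \notin T -> d j <= w' by move=> h; apply: ubw'.
pose d' := fun j => if j \in T then w' else d j.
have d'le j : d' j <= w' by rewrite /d'; case: ifP => [_|/negbT /notT].
have dec j : d j = d' j + (w - w') * chi T j.
  rewrite /d' /chi; case: ifP => [|_]; last by rewrite mulr0 addr0.
  rewrite inE => /eqP ->; ring.
have hmx k : mxs (S k) d = mxs (S k) d' + (w - w') * mxs (S k) (chi T).
  case: (boolP [exists j, S k j && (j \in T)]) => [/existsP [j /andP [Sj jT]]|].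
    have jT' := jT; rewrite inE in jT'.
    rewrite (mxs_eq (v := w)) //; last by exists j => //; apply/eqP.
    rewrite (mxs_eq (v := w')) //; last by exists j => //; rewrite /d' jT.
    rewrite (mxs_eq (v := 1)) //; first by ring.
      by move=> i _; rewrite /chi; case: ifP.
    by exists j => //; rewrite /chi jT.
  rewrite negb_exists => /forallP hn.
  have hn' j : S k j -> j \notin T by move=> Sj; have := hn j; rewrite Sj.
  have [j Sj] := hS k.
  rewrite (mxs_eq (v := 0) (d := chi T)); first last.
      by exists j => //; rewrite /chi (negbTE (hn' _ Sj)).
    by move=> i Si; rewrite /chi (negbTE (hn' _ Si)).
  rewrite mulr0 addr0; apply: mxs_ext => i Si; by rewrite /d' (negbTE (hn' _ Si)).
have hgd : gg d = gg d' + (w - w') * gg (chi T).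
  rewrite /gg (eq_bigr _ (fun k _ => congr1 (fun v => a k * v) (hmx k))).
  rewrite (eq_bigr _ (fun j _ => congr1 (fun v => b j * v) (dec j))).
  rewrite !sum_lin; ring.
have hTFT : TF (chi T).
  move=> i j /hTF [j' [h3 le]]; exists j'; split => //.
  rewrite /chi; case: ifP => jT; last by case: ifP.
  have : d j' == w.
    by rewrite eq_le lew /=; move: jT; rewrite inE => /eqP <-.
  by rewrite inE => ->.
have [neg|] := ltP (gg (chi T)) 0; first by exists T.
move=> ge0.
have hgd' : gg d' < 0.
  have : 0 <= (w - w') * gg (chi T) by rewrite mulr_ge0 // subr_ge0 ltW.
  move: hg; rewrite hgd; lra.
have hTF' : TF d'.
  move=> i j /hTF [j' [h3 le]]; exists j'; split => //.
  rewrite /d'; case: ifP => jT; case: ifP => j'T //.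
  - move: jT; rewrite inE => /eqP E; move: le; rewrite E => le.
    have : d j' == w by rewrite eq_le lew le.
    by move: j'T; rewrite inE => ->.
  - by apply: notT; rewrite jT.
apply: (IH d') => //.
rewrite -ltnS; apply: leq_trans hN; apply: proper_card; apply/properP; split.
  apply/subsetP => j; rewrite /nonmax !inE => /existsP [j' lt].
  have jT : j \notin T.
    apply/negP => jT; move: lt; rewrite {1}/d' jT; have := d'le j'.
    by rewrite leNgt => /negbTE ->.
  apply/existsP; exists jt; rewrite -hjt lt_neqAle lew andbT.
  by move: jT; rewrite inE.
exists j2.
  rewrite /nonmax inE; apply/existsP; exists jt; rewrite -hjt lt_neqAle lew andbT.
  by move: hj2; rewrite /P' inE.
rewrite /nonmax inE negb_exists; apply/forallP => j; rewrite -leNgt.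
have : d' j2 = w' by rewrite /d' (negbTE hj2).
by move=> ->; apply: d'le.
Qed.

End Tangent.

Section Rows.
Variables (R : realType) (n : nat).
Implicit Types (a : 'I_n -> option R) (x y : 'I_n -> R).

Lemma rowmax_ub a x j : leo (addo (a j) (x j)) (rowmax a x).
Proof. exact: (bigmaxo_ub (fun j => addo (a j) (x j)) (P := predT)). Qed.

Lemma rowmax_lub a x c : (forall j, leo (addo (a j) (x j)) c) -> leo (rowmax a x) c.
Proof. move=> H; apply: bigmaxo_lub => j _; exact: H. Qed.

Lemma rowmax_geP a y v : leo (Some v) (rowmax a y) ->
  exists j s, [/\ a j = Some s, v <= s + y j & rowmax a y = Some (s + y j)].
Proof.
case: (bigmaxo_att predT (fun j => addo (a j) (y j))) => [E|[j _ E]].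
  by rewrite /rowmax E.
rewrite /rowmax E; case E': (a j) => [s|] //= h; by exists j, s.
Qed.

Lemma rowmaxP a x j0 r0 : a j0 = Some r0 ->
  exists M, [/\ rowmax a x = Some M,
     (forall j r, a j = Some r -> r + x j <= M) &
     exists j1 r1, a j1 = Some r1 /\ r1 + x j1 = M].
Proof.
move=> h0.
have : leo (Some (r0 + x j0)) (rowmax a x) by have := rowmax_ub a x j0; rewrite h0.
move=> /rowmax_geP [j1 [s [h1 _ E]]].
exists (s + x j1); split => //; last by exists j1, s.
move=> j r hj; have := rowmax_ub a x j; by rewrite hj E.
Qed.

Lemma oeqP (M : R) (o : option R) (z : R) :
  reflect (exists2 r, o = Some r & r + z = M) (Some M == addo o z).
Proof.
case: o => [r|] /=; last by constructor => -[].
apply: (iffP eqP) => [[->]|[r' [<-] <-]] //; by exists r.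
Qed.

Lemma leo_antisym (a b : option R) : leo a b -> leo b a -> a = b.
Proof.
case: a => [r|]; case: b => [s|] //= h1 h2; congr Some; apply/eqP; by rewrite eq_le h1 h2.
Qed.

Lemma leo_addo_maxl (a b : option R) z : leo (addo a z) (addo (maxo a b) z).
Proof. case: a => [r|]; case: b => [s|] //=; by rewrite ?lerD2r ?le_max ?lexx. Qed.
Lemma leo_addo_maxr (a b : option R) z : leo (addo b z) (addo (maxo a b) z).
Proof. case: a => [r|]; case: b => [s|] //=; by rewrite ?lerD2r ?le_max ?lexx ?orbT. Qed.

End Rows.

Section Cuts.
Variables (R : realType) (m n p : nat).
Variables (Ap Am : 'I_m -> 'I_n -> option R) (C : 'I_p -> 'I_n -> option R)
          (mup : 'I_p -> nat) (mum : 'I_n -> nat).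

Local Notation vert := (vert m n p).
Local Notation uk k := (inr (inl (inl k)) : vert).
Local Notation jv j := (inr (inl (inr j)) : vert).
Local Notation wv i := (inr (inr i) : vert).

Lemma sum0 (I : finType) (F : I -> nat) : (forall i, F i = 0%N) -> (\sum_i F i = 0)%N.
Proof. by move=> H; rewrite big1. Qed.

Lemma sum_vert (F : vert -> nat) :
  (\sum_v F v = F (inl true) + F (inl false) + \sum_k F (uk k) + \sum_j F (jv j)
     + \sum_i F (wv i))%N.
Proof.
rewrite big_sumType /= big_bool /= big_sumType /= big_sumType /=.
by rewrite !addnA.
Qed.

Lemma cutcap_formula x K (X : {set vert}) : is_cut X ->
  cutcap Ap Am C mup mum x K X =
  (\sum_k (if uk k \in X then 0 else mup k) + \sum_j (if jv j \in X then mum j else 0)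
  + \sum_k (if uk k \in X then \sum_j (if jv j \in X then 0 else capH Ap Am C mup mum x K (uk k) (jv j)) else 0)
  + \sum_i (if wv i \in X then \sum_j (if jv j \in X then 0 else capH Ap Am C mup mum x K (wv i) (jv j)) else 0)
  + \sum_j (if jv j \in X then \sum_i (if wv i \in X then 0 else capH Ap Am C mup mum x K (jv j) (wv i)) else 0))%N.
Proof.
move=> /andP [sX tX].
have sX' : (inl true : vert) \in X := sX.
have tX' : (inl false : vert) \in X = false := negbTE tX.
set c := capH Ap Am C mup mum x K.
have inner u : (\sum_(v in ~: X) c u v =
   \sum_v (if v \in X then 0 else c u v))%N.
  by rewrite big_mkcond; apply: eq_bigr => v _; rewrite in_setC; case: (v \in X).
rewrite /cutcap -/c big_mkcond sum_vert sX' tX' inner sum_vert sX' tX'.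
have E0 : (\sum_k (if uk k \in X then 0 else c (inl true) (uk k)) =
           \sum_k (if uk k \in X then 0 else mup k))%N.
  by apply: eq_bigr => k _; case: (uk k \in X).
have E0j : (\sum_j (if jv j \in X then 0 else c (inl true) (jv j)) = 0)%N.
  by apply: sum0 => j; case: (jv j \in X).
have E0i : (\sum_i (if wv i \in X then 0 else c (inl true) (wv i)) = 0)%N.
  by apply: sum0 => i; case: (wv i \in X).
have E1 : (\sum_k (if uk k \in X then \sum_(v in ~: X) c (uk k) v else 0) =
  \sum_k (if uk k \in X then \sum_j (if jv j \in X then 0 else c (uk k) (jv j)) else 0))%N.
  apply: eq_bigr => k _; case: ifP => // _; rewrite inner sum_vert sX' tX'.
  rewrite (sum0 (F := fun k0 => if uk k0 \in X then 0 else c (uk k) (uk k0)))%N; last first.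
    by move=> k0; case: ifP.
  rewrite (sum0 (F := fun i => if wv i \in X then 0 else c (uk k) (wv i)))%N; last first.
    by move=> i; case: ifP.
  by rewrite !addn0 !add0n.
have E2 : (\sum_j (if jv j \in X then \sum_(v in ~: X) c (jv j) v else 0) =
  \sum_j (if jv j \in X then mum j else 0) +
  \sum_j (if jv j \in X then \sum_i (if wv i \in X then 0 else c (jv j) (wv i)) else 0))%N.
  rewrite -big_split; apply: eq_bigr => j _; case: ifP => // _; rewrite inner sum_vert sX' tX'.
  rewrite (sum0 (F := fun k0 => if uk k0 \in X then 0 else c (jv j) (uk k0)))%N; last first.
    by move=> k0; case: ifP.
  rewrite (sum0 (F := fun k0 => if jv k0 \in X then 0 else c (jv j) (jv k0)))%N; last first.
    by move=> k0; case: ifP.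
  by rewrite /= !add0n !addn0.
have E3 : (\sum_i (if wv i \in X then \sum_(v in ~: X) c (wv i) v else 0) =
  \sum_i (if wv i \in X then \sum_j (if jv j \in X then 0 else c (wv i) (jv j)) else 0))%N.
  apply: eq_bigr => i _; case: ifP => // _; rewrite inner sum_vert sX' tX'.
  rewrite (sum0 (F := fun k0 => if uk k0 \in X then 0 else c (wv i) (uk k0)))%N; last first.
    by move=> k0; case: ifP.
  rewrite (sum0 (F := fun k0 => if wv k0 \in X then 0 else c (wv i) (wv k0)))%N; last first.
    by move=> k0; case: ifP.
  by rewrite !addn0 !add0n.
rewrite E0 E0j E0i E1 E2 E3 /=.
lia.
Qed.

End Cuts.

Section Main.
Variables (R : realType) (m n p : nat).
Variables (Ap Am : 'I_m -> 'I_n -> option R) (C : 'I_p -> 'I_n -> option R)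
          (mup : 'I_p -> nat) (mum : 'I_n -> nat).

Local Notation vert := (vert m n p).
Local Notation uk k := (inr (inl (inl k)) : vert).
Local Notation jv j := (inr (inl (inr j)) : vert).
Local Notation wv i := (inr (inr i) : vert).
Local Notation cap := (cutcap Ap Am C mup mum).
Local Notation D := (Dtot mup).

Lemma term_le (I : finType) (F : I -> nat) i : (F i <= \sum_i F i)%N.
Proof. by rewrite (bigD1 i) //= leq_addr. Qed.

Definition base (X : {set vert}) :=
  (\sum_k (if uk k \in X then 0 else mup k) + \sum_j (if jv j \in X then mum j else 0))%N.

Lemma base_le x (K : {set 'I_n * 'I_m}) X : is_cut X -> (base X <= cap x K X)%N.
Proof.
move=> cX; rewrite (cutcap_formula _ _ _ _ _ x K cX).
by do 3! apply: leq_trans (leq_addr _ _).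
Qed.

Lemma cross1 x (K : {set 'I_n * 'I_m}) X k j : is_cut X -> uk k \in X -> jv j \notin X -> E1 C x k j ->
  (D <= cap x K X)%N.
Proof.
move=> cX ukX jX e1; rewrite (cutcap_formula _ _ _ _ _ x K cX).
apply: leq_trans (leq_addr _ _); apply: leq_trans (leq_addr _ _).
apply: leq_trans (leq_addl _ _); apply: leq_trans (term_le _ k); rewrite ukX.
apply: leq_trans (term_le _ j); by rewrite (negbTE jX) /= e1.
Qed.

Lemma cross2 x (K : {set 'I_n * 'I_m}) X i j : is_cut X -> wv i \in X -> jv j \notin X -> E2 Ap Am x i j ->
  (D <= cap x K X)%N.
Proof.
move=> cX wX jX e2; rewrite (cutcap_formula _ _ _ _ _ x K cX).
apply: leq_trans (leq_addr _ _).
apply: leq_trans (leq_addl _ _); apply: leq_trans (term_le _ i); rewrite wX.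
apply: leq_trans (term_le _ j); by rewrite (negbTE jX) /= e2.
Qed.

Lemma cross3 x (K : {set 'I_n * 'I_m}) X i j : is_cut X -> jv j \in X -> wv i \notin X -> (j, i) \in K ->
  (D <= cap x K X)%N.
Proof.
move=> cX jX wX e3; rewrite (cutcap_formula _ _ _ _ _ x K cX).
apply: leq_trans (leq_addl _ _); apply: leq_trans (term_le _ j); rewrite jX.
apply: leq_trans (term_le _ i); by rewrite (negbTE wX) /= e3.
Qed.

Lemma cap_exact x (K : {set 'I_n * 'I_m}) X : is_cut X ->
  (forall k j, uk k \in X -> jv j \notin X -> ~~ E1 C x k j) ->
  (forall i j, wv i \in X -> jv j \notin X -> ~~ E2 Ap Am x i j) ->
  (forall i j, jv j \in X -> wv i \notin X -> (j, i) \notin K) ->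
  cap x K X = base X.
Proof.
move=> cX h1 h2 h3; rewrite (cutcap_formula _ _ _ _ _ x K cX) /base.
rewrite (sum0 (F := fun k => if uk k \in X then \sum_j (if jv j \in X then 0 else capH Ap Am C mup mum x K (uk k) (jv j)) else 0)%N); last first.
  move=> k; case: ifP => // kX; apply: sum0 => j; case: ifP => // /negbT jX.
  by rewrite /= (negbTE (h1 _ _ kX jX)).
rewrite (sum0 (F := fun i => if wv i \in X then \sum_j (if jv j \in X then 0 else capH Ap Am C mup mum x K (wv i) (jv j)) else 0)%N); last first.
  move=> i; case: ifP => // iX; apply: sum0 => j; case: ifP => // /negbT jX.
  by rewrite /= (negbTE (h2 _ _ iX jX)).
rewrite (sum0 (F := fun j => if jv j \in X then \sum_i (if wv i \in X then 0 else capH Ap Am C mup mum x K (jv j) (wv i)) else 0)%N); last first.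
  move=> j; case: ifP => // jX; apply: sum0 => i; case: ifP => // /negbT iX.
  by rewrite /= (negbTE (h3 _ _ jX iX)).
by rewrite !addn0.
Qed.

Lemma mincut_spec x (K : {set 'I_n * 'I_m}) : exists X0, [/\ mincut Ap Am C mup mum x K = cap x K X0,
  is_cut X0 & forall Y, is_cut Y -> (cap x K X0 <= cap x K Y)%N].
Proof.
rewrite /mincut; case: arg_minnP; first exact: is_cut_s.
move=> X0 c0 h; by exists X0.
Qed.

Lemma cap_s x (K : {set 'I_n * 'I_m}) : cap x K [set vs m n p] = D.
Proof.
have cX : is_cut [set vs m n p] by exact: is_cut_s.
rewrite (cap_exact cX); first last.
- by move=> i j; rewrite inE.
- by move=> i j; rewrite inE.
- by move=> i j; rewrite inE.
rewrite /base (sum0 (F := fun j => if jv j \in [set vs m n p] then mum j else 0)%N); last first.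
  by move=> j; rewrite inE.
by rewrite addn0 /Dtot; apply: eq_bigr => k _; rewrite inE.
Qed.


Lemma gap_lt (a M d : R) : a < M -> (0 < `|a - M| -> d < `|a - M|) -> a + d < M.
Proof.
move=> lt h; have e : `|a - M| = M - a by rewrite distrC gtr0_norm // subr_gt0.
have := h; rewrite e subr_gt0 => /(_ lt); lra.
Qed.

Lemma rowAF x i : feasible Ap Am x -> (exists j, Amat Ap Am i j != None) ->
  exists M, [/\ rowmax (Amat Ap Am i) x = Some M,
     (forall j r, Amat Ap Am i j = Some r -> r + x j <= M),
     (forall j r, Ap i j = Some r -> r + x j <= M),
     (forall j r, Am i j = Some r -> r + x j <= M) &
     (exists ja ra, Amat Ap Am i ja = Some ra /\ ra + x ja = M) /\
     (exists j3 r3, Ap i j3 = Some r3 /\ r3 + x j3 = M)].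
Proof.
move=> fx [j0]; case E0: (Amat Ap Am i j0) => [r0|] // _.
have [M [hM ubA [ja [ra [hja hra]]]]] := rowmaxP x E0.
have ubP j r : Ap i j = Some r -> r + x j <= M.
  move=> h; have := leo_addo_maxl (Ap i j) (Am i j) (x j).
  rewrite -[maxo _ _]/(Amat Ap Am i j) h; case E: (Amat Ap Am i j) => [r'|] //= le.
  by apply: le_trans le (ubA _ _ E).
have ubM j r : Am i j = Some r -> r + x j <= M.
  move=> h; have := leo_addo_maxr (Ap i j) (Am i j) (x j).
  rewrite -[maxo _ _]/(Amat Ap Am i j) h; case E: (Amat Ap Am i j) => [r'|] //= le.
  by apply: le_trans le (ubA _ _ E).
exists M; split => //; split; first by exists ja, ra.
case: (maxo_cases (Ap i ja) (Am i ja)); rewrite -[maxo _ _]/(Amat Ap Am i ja) hja.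
  by move=> e; exists ja, ra.
move=> e.
have h1 : leo (Some M) (rowmax (Am i) x).
  by have := rowmax_ub (Am i) x ja; rewrite -e /= hra.
have := leo_trans h1 (fx i) => /rowmax_geP [j' [s [hs le _]]].
exists j', s; split => //; apply/eqP; rewrite eq_le le andbT; exact: ubP hs.
Qed.

Lemma rowCP x k : (exists j, C k j != None) ->
  exists M, [/\ rowmax (C k) x = Some M,
     (forall j r, C k j = Some r -> r + x j <= M) &
     exists j1 r1, C k j1 = Some r1 /\ r1 + x j1 = M].
Proof. move=> [j0]; case E0: (C k j0) => [r0|] // _; exact: (rowmaxP x E0). Qed.

Lemma descent x K X (delta : R) :
  standing_assumptions Ap Am C mup mum -> feasible Ap Am x ->
  in_frakG Ap Am x K -> is_cut X -> (cap x K X < D)%N ->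
  below_eps Ap Am C x delta ->
  feasible Ap Am (shift x (Jof X) delta) /\
  fobj C mup mum (shift x (Jof X) delta) < fobj C mup mum x.
Proof.
move=> [hA [hC [hsum _]]] fx [hK1 hK2] cX lt [dpos [gA gC]].
set J := Jof X; set y := shift x J delta.
have inJ j : (j \in J) = (jv j \notin X) by rewrite /J /Jof inE.
have yE j : y j = x j + (if j \in J then delta else 0) by [].
have yge j : x j <= y j by rewrite yE; case: ifP => _; lra.
split.
  move=> i.
  have [M [hM ubA ubP ubM [[ja [ra [hja hra]]] [j3 [r3 [h3 hr3]]]]]] := rowAF fx (hA i).
  have w3 v : v <= M -> leo (Some v) (rowmax (Ap i) y).
    move=> le; apply: (leo_trans _ (rowmax_ub _ _ j3)); rewrite h3 /=.
    by have := yge j3; lra.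
  apply: rowmax_lub => j; case Ej: (Am i j) => [r|] //.
  change (leo (Some (r + y j)) (rowmax (Ap i) y)).
  have lerM := ubM _ _ Ej.
  case jJ: (j \in J); last by apply: w3; rewrite yE jJ addr0.
  have gapcase : Amat Ap Am i j = Some r -> r + x j != M -> leo (Some (r + y j)) (rowmax (Ap i) y).
    move=> eA ne; apply: w3; rewrite yE jJ addrA; apply: ltW; apply: gap_lt.
      by rewrite lt_neqAle ne lerM.
    rewrite -hra; exact: gA eA hja.
  case: (boolP (r + x j == M)) => [/eqP eM | neM].
    have e2 : E2 Ap Am x i j by rewrite /E2 hM; apply/oeqP; exists r.
    have wX : wv i \notin X.
      apply/negP => wX; have jX : jv j \notin X by rewrite -inJ.
      by have := cross2 K cX wX jX e2; rewrite leqNgt lt.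
    have /eqP/cards1P [j0 hj0] := hK2 i.
    have j0K : (j0, i) \in K.
      have : j0 \in [set j0] by rewrite inE.
      by rewrite -hj0 inE.
    have e3 : E3 Ap Am x j0 i := hK1 _ j0K.
    move: e3; rewrite /E3 hM => /oeqP [s hs es].
    have j0J : j0 \in J.
      rewrite inJ; apply/negP => jX; have := cross3 x cX jX wX j0K.
      by rewrite leqNgt lt.
    apply: (leo_trans _ (rowmax_ub _ _ j0)); rewrite hs /= !yE jJ j0J; lra.
  case Ep: (Ap i j) => [s|].
    case: (lerP r s) => [rs|sr].
      apply: (leo_trans _ (rowmax_ub _ _ j)); rewrite Ep /=; lra.
    apply: gapcase neM; rewrite /Amat Ep Ej /= max_r //; exact: ltW.
  by apply: gapcase neM; rewrite /Amat Ep Ej.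
pose A := (\sum_k (if uk k \in X then 0 else mup k))%N.
pose B := (\sum_j (if jv j \in X then mum j else 0))%N.
pose B' := (\sum_j (if j \in J then mum j else 0))%N.
have BB : (B + B')%N = (\sum_j mum j)%N.
  rewrite -big_split; apply: eq_bigr => j _; rewrite inJ; case: (jv j \in X) => /=; by rewrite ?addn0 ?add0n.
have AB : (A + B <= cap x K X)%N by exact: base_le.
have AB' : (A < B')%N.
  have BB2 : (B + B' = \sum_(j < n) mum j)%N by rewrite BB.
  move: lt AB BB2; rewrite /Dtot hsum; lia.
have AB'R : (A%:R : R) < B'%:R by rewrite ltr_nat.
have hk k : odflt 0 (rowmax (C k) y) <= odflt 0 (rowmax (C k) x) + (if uk k \in X then 0 else delta).
  have [M [hM ub [jc [rc [hjc hrc]]]]] := rowCP x (hC k).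
  have [My [hMy _ [j [r [hj hr]]]]] := rowCP y (hC k).
  rewrite hM hMy /= -hr.
  set bb := (if uk k \in X then 0 else delta).
  have bon : 0 <= bb by rewrite /bb; case: ifP => _; lra.
  have lerM := ub _ _ hj.
  case jJ: (j \in J); last by rewrite yE jJ; lra.
  case: (boolP (r + x j == M)) => [/eqP eM | neM].
    have e1 : E1 C x k j by rewrite /E1 hM; apply/oeqP; exists r.
    rewrite /bb; case: ifP => kX.
      have jX : jv j \notin X by rewrite -inJ.
      by have := cross1 K cX kX jX e1; rewrite leqNgt lt.
    rewrite yE jJ; lra.
  have := gap_lt (a := r + x j) (M := M) (d := delta).
  rewrite lt_neqAle neM lerM -hrc => /(_ isT (gC _ _ _ _ _ hj hjc)).
  rewrite yE jJ hrc; lra.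
have s1 : \sum_k (mup k)%:R * odflt 0 (rowmax (C k) y) <=
          \sum_k (mup k)%:R * odflt 0 (rowmax (C k) x) + delta * A%:R.
  rewrite natr_sum mulr_sumr -big_split /=; apply: ler_sum => k _.
  have := hk k; have m0 : (0 : R) <= (mup k)%:R by [].
  case: ifP => _; rewrite ?mulr0 ?addr0 => h; first by rewrite ler_wpM2l.
  by rewrite [delta * _]mulrC -mulrDr ler_wpM2l.
have s2 : \sum_j (mum j)%:R * y j = \sum_j (mum j)%:R * x j + delta * B'%:R.
  rewrite natr_sum mulr_sumr -big_split /=; apply: eq_bigr => j _.
  rewrite yE; case: ifP => _; rewrite ?mulr0 ?addr0 //; ring.
rewrite /fobj -/y s2.
have : delta * A%:R < delta * B'%:R by rewrite ltr_pM2l.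
lra.
Qed.

Definition dA x (t : 'I_m * 'I_n * 'I_n) : R :=
  match Amat Ap Am t.1.1 t.1.2, Amat Ap Am t.1.1 t.2 with
  | Some r1, Some r2 => `|r1 + x t.1.2 - (r2 + x t.2)|
  | _, _ => 0 end.
Definition dC x (t : 'I_p * 'I_n * 'I_n) : R :=
  match C t.1.1 t.1.2, C t.1.1 t.2 with
  | Some r1, Some r2 => `|r1 + x t.1.2 - (r2 + x t.2)|
  | _, _ => 0 end.
Definition posf (e : R) : R := if 0 < e then e else 1.

Lemma foldmin (s : seq R) : all (fun e => 0 < e) s ->
  0 < foldr Num.min 1 s /\ forall e, e \in s -> foldr Num.min 1 s <= e.
Proof.
elim: s => [|e s IH] /=; first by split => //; rewrite ltr01.
move=> /andP [pe /IH [h1 h2]]; split; first by rewrite lt_min pe h1.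
move=> e'; rewrite inE => /orP [/eqP ->|/h2 h]; first by rewrite ge_min lexx.
by rewrite ge_min h orbT.
Qed.

Lemma eps_exists x : exists d, below_eps Ap Am C x d.
Proof.
pose L := [seq posf (dA x t) | t <- enum predT] ++ [seq posf (dC x t) | t <- enum predT].
have allp : all (fun e => 0 < e) L.
  apply/allP => e; rewrite mem_cat => /orP [] /mapP [t _ ->]; rewrite /posf;
    by case: ifP => // _; rewrite ltr01.
have [h1 h2] := foldmin allp.
exists (foldr Num.min 1 L / 2); split; first by rewrite divr_gt0.
have half : foldr Num.min 1 L / 2 < foldr Num.min 1 L by rewrite ltr_pdivrMr // ltr_pMr // ltr1n.
split.
  move=> i j1 j2 r1 r2 e1 e2 pos; apply: lt_le_trans half _; apply: h2.
  rewrite mem_cat; apply/orP; left; apply/mapP; exists (i, j1, j2); first by rewrite mem_enum.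
  by rewrite /posf /dA /= e1 e2 pos.
move=> k j1 j2 r1 r2 e1 e2 pos; apply: lt_le_trans half _; apply: h2.
rewrite mem_cat; apply/orP; right; apply/mapP; exists (k, j1, j2); first by rewrite mem_enum.
by rewrite /posf /dC /= e1 e2 pos.
Qed.


Lemma hardB x : standing_assumptions Ap Am C mup mum -> feasible Ap Am x ->
  ~ local_optimum Ap Am C mup mum x ->
  exists K X, [/\ in_frakG Ap Am x K, is_cut X & (cap x K X < D)%N].
Proof.
move=> [hA [hC [hsum _]]] fx nlo.
have [d0 [d0pos [gA gC]]] := eps_exists x.
have [y [fy [close lty]]] : exists y, feasible Ap Am y /\
    (forall j, `|x j - y j| < d0 / 2) /\ fobj C mup mum y < fobj C mup mum x.
  apply: NNPP => H; apply: nlo; split => //; exists (d0 / 2); split.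
    by rewrite divr_gt0.
  move=> y fy cl; rewrite leNgt; apply/negP => lt; apply: H; by exists y.
pose d j := y j - x j.
have dj j : - (d0 / 2) < d j < d0 / 2.
  have := close j; rewrite ltr_distl /d => /andP [h1 h2]; apply/andP; split; lra.
pose S := fun k => [pred j | E1 C x k j].
pose T2 := fun i j => E2 Ap Am x i j.
pose T3 := fun i j => E3 Ap Am x j i.
pose a := fun k => (mup k)%:R : R.
pose b := fun j => (mum j)%:R : R.
have hS k : exists j, S k j.
  have [M [hM _ [j1 [r1 [h1 e1]]]]] := rowCP x (hC k).
  by exists j1; rewrite /S inE /E1 hM; apply/oeqP; exists r1.
have hab : \sum_k a k = \sum_j b j by rewrite /a /b -!natr_sum hsum.
have hTF : TF T2 T3 d.
  move=> i j; rewrite /T2 /T3.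
  have [M [hM ubA ubP ubM [[ja [ra [hja hra]]] _]]] := rowAF fx (hA i).
  rewrite /E2 hM => /oeqP [r hr er].
  have h0 : leo (Some (r + y j)) (rowmax (Am i) y).
    by have := rowmax_ub (Am i) y j; rewrite hr.
  have /rowmax_geP [j' [s [hs le E]]] := leo_trans h0 (fy i).
  case: (boolP (s + x j' == M)) => [/eqP es | ne].
    exists j'; split; first by rewrite /E3 hM; apply/oeqP; exists s.
    move: (dj j) (dj j') => /andP [_ _] /andP [_ _]; rewrite /d; lra.
  exfalso.
  have gapc : Amat Ap Am i j' = Some s -> False.
    move=> eA; have := gap_lt (a := s + x j') (M := M) (d := d0).
    rewrite lt_neqAle ne (ubP _ _ hs) -hra => /(_ isT (gA _ _ _ _ _ eA hja)).
    move: (dj j) (dj j') => /andP [h1 h2] /andP [h3 h4]; rewrite /d in h1 h2 h3 h4.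
    lra.
  case Em: (Am i j') => [t|].
    case: (ltP s t) => [st|ts].
      have := leo_trans (rowmax_ub (Am i) y j') (fy i); rewrite Em E /=; lra.
    by apply: gapc; rewrite /Amat hs Em /= max_l.
  by apply: gapc; rewrite /Amat hs Em.
have hg : gg S a b d < 0.
  have hk k : mxs (S k) d <= odflt 0 (rowmax (C k) y) - odflt 0 (rowmax (C k) x).
    have [j1 Sj1] := hS k.
    have [_ [jm Sjm ->]] := mxsP d Sj1.
    have [M [hM _ _]] := rowCP x (hC k).
    move: Sjm; rewrite /S inE /E1 hM => /oeqP [r hr er].
    have [My [hMy _ _]] := rowCP y (hC k).
    have := rowmax_ub (C k) y jm; rewrite hr hMy /= /d; lra.
  have s1 : \sum_k a k * mxs (S k) d <=
      \sum_k a k * odflt 0 (rowmax (C k) y) - \sum_k a k * odflt 0 (rowmax (C k) x).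
    rewrite -sumrB; apply: ler_sum => k _; rewrite -mulrBr; apply: ler_wpM2l.
      by rewrite /a.
    exact: hk.
  have s2 : \sum_j b j * d j = \sum_j b j * y j - \sum_j b j * x j.
    by rewrite -sumrB; apply: eq_bigr => j _; rewrite /d mulrBr.
  move: lty; rewrite /gg /fobj s2 -/a -/b; lra.
have [J [hTFJ hgJ]] := key_tangent hS hab hTF hg.
pose pickf i := if [pick j | E3 Ap Am x j i && (j \in J)] is Some j then Some j
                else [pick j | E3 Ap Am x j i].
have spec i : exists j0, [/\ pickf i = Some j0, E3 Ap Am x j0 i &
    (exists j, E3 Ap Am x j i && (j \in J)) -> j0 \in J].
  rewrite /pickf; case: pickP => [j /andP [e jJ] | none].
    by exists j; split.
  case: pickP => [j e | none'].
    exists j; split => // -[j' hj']; by rewrite none in hj'.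
  exfalso.
  have [M [hM _ _ _ [_ [j3 [r3 [h3 e3]]]]]] := rowAF fx (hA i).
  have := none' j3; rewrite /E3 hM.
  by have -> : (Some M == addo (Ap i j3) (x j3)) by apply/oeqP; exists r3.
pose K := [set e : 'I_n * 'I_m | pickf e.2 == Some e.1].
pose X := [set v : vert | match v with
   | inl bb => bb
   | inr (inl (inl k)) => ~~ [exists j, E1 C x k j && (j \in J)]
   | inr (inl (inr j)) => j \notin J
   | inr (inr i) => if pickf i is Some j0 then j0 \notin J else true end].
have cX : is_cut X by rewrite /is_cut !inE.
have fK : in_frakG Ap Am x K.
  split.
    move=> [j i]; rewrite inE /= => /eqP e.
    have [j0 [e0 h3 _]] := spec i; move: e; rewrite e0 => -[ej]; rewrite /= -ej; exact: h3.
  move=> i; apply/eqP/cards1P.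
  have [j0 [e0 _ _]] := spec i; exists j0; apply/setP => j; rewrite !inE /= e0.
  by apply/eqP/eqP => [[->]|->].
exists K, X; split => //.
rewrite (cap_exact cX); first last.
- move=> i j; rewrite !inE /=; have [j0 [e0 _ _]] := spec i; rewrite e0 negbK => jJ j0J.
  apply/negP => /eqP [ej]; by rewrite ej (negbTE jJ) in j0J.
- move=> i j; rewrite !inE /=; have [j0 [e0 _ h]] := spec i; rewrite e0 negbK => j0J jJ.
  apply/negP => e2; have [j' [e3 le]] := hTFJ i j e2.
  move: le; rewrite /chi jJ; case: ifP => j'J; last by rewrite ler10.
  move=> _; have := h (ex_intro _ j' (introT andP (conj e3 j'J))).
  by rewrite (negbTE j0J).
- move=> k j; rewrite !inE => hk hj; apply/negP => e1.
  have hk' : ~~ [exists j, E1 C x k j && (j \in J)] := hk.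
  have jJ : j \in J by move: hj; rewrite /= negbK.
  move: hk'; rewrite negb_exists => /forallP /(_ j); by rewrite e1 jJ.
pose A := (\sum_k (if [exists j, E1 C x k j && (j \in J)] then mup k else 0))%N.
pose B := (\sum_j (if j \in J then 0 else mum j))%N.
pose B' := (\sum_j (if j \in J then mum j else 0))%N.
have eb : base X = (A + B)%N.
  rewrite /base; congr (_ + _)%N; apply: eq_bigr => j _; rewrite inE /=.
    by case: [exists _, _].
  by case: (j \in J).
have BB : (B + B')%N = (\sum_(j < n) mum j)%N.
  rewrite -big_split; apply: eq_bigr => j _; case: (j \in J) => /=; by rewrite ?addn0.
have gJ : gg S a b (chi R J) = A%:R - B'%:R.
  rewrite /gg /A /B' !natr_sum; congr (_ - _); apply: eq_bigr => i _.
    case: (boolP [exists j, E1 C x i j && (j \in J)]) => [/existsP [j /andP [e1 jJ]]|].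
      rewrite (mxs_eq (v := 1)) ?mulr1 //.
        by move=> j' _; rewrite /chi; case: ifP.
      by exists j; rewrite /S ?inE // /chi jJ.
    rewrite negb_exists => /forallP hn.
    have hn' j : S i j -> j \notin J.
      by rewrite /S inE => e1; have := hn j; rewrite e1.
    have [j Sj] := hS i.
    rewrite (mxs_eq (v := 0)) ?mulr0 //.
      by move=> j' Sj'; rewrite /chi (negbTE (hn' _ Sj')).
    by exists j => //; rewrite /chi (negbTE (hn' _ Sj)).
  by rewrite /b /chi; case: ifP; rewrite ?mulr1 ?mulr0.
have AB' : (A < B')%N by rewrite -(ltr_nat R); move: hgJ; rewrite gJ; lra.
rewrite eb /Dtot hsum; move: AB' BB; lia.
Qed.

End Main.

Lemma below_mono (R : realType) (m n p : nat)
  (Ap Am : 'I_m -> 'I_n -> option R) (C : 'I_p -> 'I_n -> option R) x (d0 d : R) :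
  below_eps Ap Am C x d0 -> 0 < d -> d <= d0 -> below_eps Ap Am C x d.
Proof.
move=> [_ [gA gC]] dpos le; split => //; split.
  move=> i j1 j2 r1 r2 e1 e2 pos; exact: le_lt_trans le (gA _ _ _ _ _ e1 e2 pos).
move=> k j1 j2 r1 r2 e1 e2 pos; exact: le_lt_trans le (gC _ _ _ _ _ e1 e2 pos).
Qed.

Theorem theorem1p2 (R : realType) (m n p : nat)
  (Ap Am : 'I_m -> 'I_n -> option R) (C : 'I_p -> 'I_n -> option R)
  (mup : 'I_p -> nat) (mum : 'I_n -> nat) (x : 'I_n -> R) :
  standing_assumptions Ap Am C mup mum ->
  feasible Ap Am x ->
  (local_optimum Ap Am C mup mum x <->
     (forall K : {set 'I_n * 'I_m}, in_frakG Ap Am x K ->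
        mincut Ap Am C mup mum x K = Dtot mup)) /\
  (~ local_optimum Ap Am C mup mum x ->
     exists K : {set 'I_n * 'I_m}, in_frakG Ap Am x K /\
     exists X : {set vert m n p},
       is_min_cut Ap Am C mup mum x K X /\
       (cutcap Ap Am C mup mum x K X < Dtot mup)%N /\
       forall delta : R, below_eps Ap Am C x delta ->
         feasible Ap Am (shift x (Jof X) delta) /\
         fobj C mup mum (shift x (Jof X) delta) < fobj C mup mum x).
Proof.
move=> hst fx; split; first split.
- move=> lo K fK.
  have [X0 [e cX0 minX0]] := mincut_spec Ap Am C mup mum x K.
  rewrite e; apply/eqP; rewrite eqn_leq.
  have -> /= : (cutcap Ap Am C mup mum x K X0 <= Dtot mup)%N.
    by rewrite -(cap_s Ap Am C mup mum x K); apply: minX0; exact: is_cut_s.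
  rewrite leqNgt; apply/negP => lt.
  have [_ [dL [dLpos hL]]] := lo.
  have [d0 hd0] := eps_exists Ap Am C x.
  have d0pos : 0 < d0 by case: hd0.
  pose dd := Num.min d0 (dL / 2).
  have ddpos : 0 < dd by rewrite lt_min d0pos divr_gt0.
  have ddle : dd <= d0 by rewrite ge_min lexx.
  have ddle2 : dd <= dL / 2 by rewrite ge_min lexx orbT.
  have hb := below_mono hd0 ddpos ddle.
  have [fy lty] := descent hst fx fK cX0 lt hb.
  have := hL _ fy; rewrite leNgt lty => /(_ _) H; have : false; last by [].
  apply: H => j; rewrite /shift; case: ifP => _; last by rewrite addr0 subrr normr0.
  rewrite opprD addrA subrr add0r normrN gtr0_norm //; lra.
- move=> H; apply: NNPP => nlo.
  have [K [X [fK cX lt]]] := hardB hst fx nlo.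
  have [X0 [e cX0 minX0]] := mincut_spec Ap Am C mup mum x K.
  have := H K fK; rewrite e => E.
  by have := minX0 _ cX; rewrite E leqNgt lt.
move=> nlo.
have [K [X [fK cX lt]]] := hardB hst fx nlo.
have [X0 [e cX0 minX0]] := mincut_spec Ap Am C mup mum x K.
have lt0 : (cutcap Ap Am C mup mum x K X0 < Dtot mup)%N.
  exact: leq_ltn_trans (minX0 _ cX) lt.
exists K; split => //; exists X0; split; first by split.
split => // delta hb; exact: descent hst fx fK cX0 lt0 hb.
Qed.
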